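(* Let $\phi$ be a posterior family for a model $\pi$ with data space $Y$ and parameter space $\Theta$, and let $f$ be a test quantity. (1) For any fixed $y\in Y$: if, as the number of sample draws $M\to\infty$, we have for all $i\in\{0,\dots,M\}$ that $Q_{\phi,f}(i\mid y)\to\frac{i+1}{M+1}$, then $q_{\phi,f}(x\mid y)=x$ for all $x\in[0,1]$. (2) If, as $M\to\infty$, we have for all $i\in\{0,\dots,M\}$ that $\int_Y Q_{\phi,f}(i\mid y)\pi_{\text{marg}}(y)\,\mathrm{d}y\to\frac{i+1}{M+1}$, then $\phi$ passes continuous SBC with respect to $f$.
   Context: Model $\pi$: prior density $\pi_{\text{prior}}(\theta)$ on $\Theta$, observation density $\pi_{\text{obs}}(y\mid\theta)$ on $Y$, $\pi_{\text{marg}}(y)=\int_\Theta\pi_{\text{obs}}(y\mid\theta)\pi_{\text{prior}}(\theta)\,\mathrm{d}\theta$, $\pi_{\text{post}}(\theta\mid y)=\pi_{\text{obs}}(y\mid\theta)\pi_{\text{prior}}(\theta)/\pi_{\text{marg}}(y)$. A posterior family is $\phi:\Theta\times Y\to\mathbb{R}^+$ with $\int_\Theta\phi(\theta\mid y)\,\mathrm{d}\theta=1$ for all $y$; a test quantity is a measurable $f:\Theta\times Y\to\mathbb{R}$. Sample quantities: for $M\in\mathbb{N}$, $\theta_1,\dots,\theta_M$ i.i.d. from $\phi(\cdot\mid y)$, $N^{\mathtt{less}}=\sum_m\mathbb{I}[f(\theta_m,y)<f(\tilde\theta,y)]$, $N^{\mathtt{equals}}=\sum_m\mathbb{I}[f(\theta_m,y)=f(\tilde\theta,y)]$,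 $K$ uniform on $\{0,\dots,N^{\mathtt{equals}}\}$, $N^{\mathtt{total}}=N^{\mathtt{less}}+K$; $R_{\phi,f}(i\mid\tilde\theta,y)=\Pr(N^{\mathtt{total}}\le i)$; $Q_{\phi,f}(i\mid y)=\int_\Theta\pi_{\text{post}}(\tilde\theta\mid y)R_{\phi,f}(i\mid\tilde\theta,y)\,\mathrm{d}\tilde\theta$. Continuous quantities: $C_{\phi,f}(s\mid y)=\int_\Theta\mathbb{I}[f(\theta,y)\le s]\phi(\theta\mid y)\,\mathrm{d}\theta$, $D_{\phi,f}(s\mid y)=\int_\Theta\mathbb{I}[f(\theta,y)=s]\phi(\theta\mid y)\,\mathrm{d}\theta$; with $U\sim\mathrm{uniform}[0,1]$, $r_{\phi,f}(x\mid\tilde\theta,y)=\Pr\big(C_{\phi,f}(f(\tilde\theta,y)\mid y)-U\,D_{\phi,f}(f(\tilde\theta,y)\mid y)\le x\big)$ and $q_{\phi,f}(x\mid y)=\int_\Theta\pi_{\text{post}}(\tilde\theta\mid y)r_{\phi,f}(x\mid\tilde\theta,y)\,\mathrm{d}\tilde\theta$ for $x\in[0,1]$. $\phi$ passes continuous SBC w.r.t. $f$ if $\int_Y q_{\phi,f}(x\mid y)\pi_{\text{marg}}(y)\,\mathrm{d}y=x$ for all $x\in[0,1]$. *)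

(* Defs.v *)
From HB Require Import structures.
From mathcomp Require Import all_boot all_order all_algebra.
From mathcomp Require Import all_classical all_reals all_analysis.
Set Implicit Arguments. Unset Strict Implicit. Unset Printing Implicit Defensive.
Import Order.TTheory GRing.Theory Num.Theory.
Local Open Scope classical_set_scope.
Local Open Scope ring_scope.

(* Conventions:
   - Theta, Y are measurable spaces with reference measures muT, muY
     ("d theta", "d y").
   - prior th            = pi_prior(theta)
   - obs th y            = pi_obs(y | theta)
   - phi th y            = phi(theta | y)
   - f th y              = f(theta, y)                                     *)

Section SBC.
Context {R : realType} {d1 d2 : measure_display}
  {Theta : measurableType d1} {Y : measurableType d2}.
Variables (muT : {measure set Theta -> \bar R}).

Definition pi_marg (prior : Theta -> R) (obs : Theta -> Y -> R) (y : Y) : R :=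
  Rintegral muT setT (fun th => obs th y * prior th).

Definition pi_post (prior : Theta -> R) (obs : Theta -> Y -> R)
  (th : Theta) (y : Y) : R :=
  obs th y * prior th / pi_marg prior obs y.

(* Expectation of g(theta_1,...,theta_M) for theta_1,...,theta_M i.i.d. with
   density p (w.r.t. muT), written as the iterated integral
   \int p(t1) \int p(t2) ... \int p(tM) g(t1,...,tM) dtM ... dt1. *)
Fixpoint iid_expect (p : Theta -> R) (M : nat) (g : seq Theta -> R) : R :=
  match M with
  | 0 => g [::]
  | M'.+1 => Rintegral muT setT
               (fun t => p t * iid_expect p M' (fun s => g (t :: s)))
  end.

Variables (phi : Theta -> Y -> R) (f : Theta -> Y -> R).

Definition N_less (s : seq Theta) (tht : Theta) (y : Y) : nat :=
  count (fun t => f t y < f tht y) s.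
Definition N_equals (s : seq Theta) (tht : Theta) (y : Y) : nat :=
  count (fun t => f t y == f tht y) s.

(* Pr(N^less + K <= i) for K uniform on {0,...,N^equals}, given the sample *)
Definition prob_total_le_given (i : nat) (s : seq Theta) (tht : Theta) (y : Y)
  : R :=
  (count (fun k => (N_less s tht y + k <= i)%N)
         (iota 0 (N_equals s tht y).+1))%:R
  / (N_equals s tht y).+1%:R.

Definition R_rank (M i : nat) (tht : Theta) (y : Y) : R :=
  iid_expect (phi^~ y) M (fun s => prob_total_le_given i s tht y).

Definition Q_rank (prior : Theta -> R) (obs : Theta -> Y -> R)
  (M i : nat) (y : Y) : R :=
  Rintegral muT setT (fun tht => pi_post prior obs tht y * R_rank M i tht y).

Definition C_cdf (x : R) (y : Y) : R :=
  Rintegral muT setT (fun th => (f th y <= x)%R%:R * phi th y).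
Definition D_atom (x : R) (y : Y) : R :=
  Rintegral muT setT (fun th => (f th y == x)%R%:R * phi th y).

Definition r_cont (x : R) (tht : Theta) (y : Y) : R :=
  fine ((@lebesgue_measure R)
    [set u : R | (0 <= u <= 1) /\
                 C_cdf (f tht y) y - u * D_atom (f tht y) y <= x]).

Definition q_cont (prior : Theta -> R) (obs : Theta -> Y -> R)
  (x : R) (y : Y) : R :=
  Rintegral muT setT (fun tht => pi_post prior obs tht y * r_cont x tht y).

End SBC.

Definition passes_continuous_SBC {R : realType} {d1 d2 : measure_display}
  {Theta : measurableType d1} {Y : measurableType d2}
  (muT : {measure set Theta -> \bar R}) (muY : {measure set Y -> \bar R})
  (prior : Theta -> R) (obs : Theta -> Y -> R)
  (phi : Theta -> Y -> R) (f : Theta -> Y -> R) : Prop :=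
  forall x : R, 0 <= x <= 1 ->
    Rintegral muY setT
      (fun y => q_cont muT phi f prior obs x y * pi_marg muT prior obs y) = x.

(* Main.v *)
Require Import Defs.
From HB Require Import structures.
From mathcomp Require Import all_boot all_order all_algebra.
From mathcomp Require Import all_classical all_reals all_analysis.
From mathcomp Require Import measurable_realfun.
From mathcomp Require Import ring lra zify.
Import Order.TTheory GRing.Theory Num.Theory.
Local Open Scope classical_set_scope.
Local Open Scope ring_scope.

Section Pure.
Context {R : realType}.

Fixpoint EM (a b : R) (M : nat) (G : nat -> nat -> R) {struct M} : R :=
  match M with
  | 0 => G 0%N 0%N
  | M'.+1 => a * EM a b M' (fun l e => G l.+1 e) + b * EM a b M' (fun l e => G l e.+1)
             + (1 - a - b) * EM a b M' G
  end.

Lemma EM_ext a b M G G' : (forall l e, (l + e <= M)%N -> G l e = G' l e) ->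
  EM a b M G = EM a b M G'.
Proof.
elim: M G G' => [|M IH] G G' H /=; first by apply: H.
rewrite (IH (fun l e => G l.+1 e) (fun l e => G' l.+1 e)); last by move=> l e le; apply: H; rewrite addSn.
rewrite (IH (fun l e => G l e.+1) (fun l e => G' l e.+1)); last by move=> l e le; apply: H; rewrite addnS.
by rewrite (IH G G') // => l e le; apply: H; rewrite (leq_trans le).
Qed.

Lemma EM_le a b M G G' : 0 <= a -> 0 <= b -> a + b <= 1 ->
  (forall l e, (l + e <= M)%N -> G l e <= G' l e) ->
  EM a b M G <= EM a b M G'.
Proof.
move=> a0 b0 ab; elim: M G G' => [|M IH] G G' H /=; first by have := H 0%N 0%N; apply.
have c0 : 0 <= 1 - a - b by lra.
rewrite lerD // ?lerD //; apply: ler_wpM2l => //; apply: IH => l e le; apply: H.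
- by rewrite addSn.
- by rewrite addnS.
- by rewrite (leq_trans le).
Qed.

Lemma EM_add a b M G G' :
  EM a b M (fun l e => G l e + G' l e) = EM a b M G + EM a b M G'.
Proof.
elim: M G G' => [|M IH] G G' //=.
rewrite (IH (fun l e => G l.+1 e)) (IH (fun l e => G l e.+1)) IH; ring.
Qed.

Lemma EM_scale a b M c G :
  EM a b M (fun l e => c * G l e) = c * EM a b M G.
Proof.
elim: M G => [|M IH] G //=.
rewrite (IH (fun l e => G l.+1 e)) (IH (fun l e => G l e.+1)) IH; ring.
Qed.

Lemma EM_cst a b M c : EM a b M (fun _ _ => c) = c.
Proof. elim: M => [|M IH] //=; rewrite !IH; ring. Qed.

Lemma EM_sqL a b M s :
  EM a b M (fun l e => (l%:R + s) ^+ 2) = (a * M%:R + s) ^+ 2 + M%:R * a * (1 - a).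
Proof.
elim: M s => [|M IH] s /=; first by rewrite mulr0 add0r mul0r mul0r addr0.
rewrite (@EM_ext a b M (fun l e => (l.+1%:R + s) ^+ 2) (fun l e => (l%:R + (s + 1)) ^+ 2)); last first.
  by move=> l e _; rewrite -addn1 natrD; ring.
rewrite !IH -[M.+1]addn1 natrD; ring.
Qed.

Lemma EM_sqE a b M s :
  EM a b M (fun l e => (e%:R + s) ^+ 2) = (b * M%:R + s) ^+ 2 + M%:R * b * (1 - b).
Proof.
elim: M s => [|M IH] s /=; first by rewrite mulr0 add0r mul0r mul0r addr0.
rewrite (@EM_ext a b M (fun l e => (e.+1%:R + s) ^+ 2) (fun l e => (e%:R + (s + 1)) ^+ 2)); last first.
  by move=> l e _; rewrite -addn1 natrD; ring.
rewrite !IH -[M.+1]addn1 natrD; ring.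
Qed.

End Pure.
Section PureD.
Context {R : realType}.

Lemma natS (n : nat) : (n.+1)%:R = n%:R + 1 :> R.
Proof. by rewrite -addn1 natrD. Qed.

Lemma count_iota_le l i n :
  count (fun k => (l + k <= i)%N) (iota 0 n) = minn n (i.+1 - l).
Proof.
elim: n => [|n IH]; first by rewrite min0n.
rewrite -addn1 iotaD count_cat IH /= add0n addn0.
case: (leqP (l + n) i) => H /=; lia.
Qed.

Definition Gi (i l e : nat) : R :=
  (count (fun k => (l + k <= i)%N) (iota 0 e.+1))%:R / e.+1%:R.

Lemma Gi_eq i l e : Gi i l e = (minn e.+1 (i.+1 - l))%:R / e.+1%:R.
Proof. by rewrite /Gi count_iota_le. Qed.

Lemma Gi_ge0 i l e : 0 <= Gi i l e.
Proof. by rewrite /Gi divr_ge0. Qed.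

Lemma Gi_le1 i l e : Gi i l e <= 1.
Proof.
rewrite Gi_eq ler_pdivrMr ?ltr0Sn // mul1r ler_nat; exact: geq_minl.
Qed.

Definition rho (x a b : R) : R :=
  if b == 0 then ((a <= x)%R%:R : R) else Num.max 0 (Num.min 1 ((x - a) / b)).

Lemma rho_ge0 x a b : 0 <= rho x a b.
Proof. rewrite /rho; case: ifP => _; first by case: (a <= x)%R. by rewrite le_max lexx. Qed.

Lemma rho_le1 x a b : rho x a b <= 1.
Proof.
rewrite /rho; case: ifP => _; first by case: (a <= x)%R.
by rewrite ge_max ler01 ge_min lexx.
Qed.

End PureD.
Section PureD2.
Context {R : realType}.

Lemma small_dev (u D X : R) : 0 < D -> u ^+ 2 <= X -> 9 * X < D ^+ 2 ->
  3 * u < D /\ - (3 * u) < D.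
Proof. move=> D0 uX XD; split; nra. Qed.

Lemma G_lower (a b x δ : R) (M i l e : nat) :
  0 <= a -> 0 <= b -> a + b <= 1 -> 0 < δ -> 3 <= δ * M%:R ->
  (x + δ) * M%:R <= i%:R ->
  rho x a b - 9 * ((l%:R - a * M%:R) ^+ 2 + (e%:R - b * M%:R) ^+ 2) / (δ * M%:R) ^+ 2
    <= Gi i l e.
Proof.
move=> a0 b0 ab d0 dM xi.
set m := M%:R in dM xi *; set L := l%:R; set E := e%:R; set I := i%:R in xi *.
have D0 : 0 < δ * m by lra.
have m0 : 0 < m by nra.
set X := (L - a * m) ^+ 2 + (E - b * m) ^+ 2.
have X0 : 0 <= X by apply: addr_ge0; exact: sqr_ge0.
have rho1 := rho_le1 x a b; have rho0 := rho_ge0 x a b.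
have G0 := @Gi_ge0 R i l e.
have B0 : 0 <= 9 * X / (δ * m) ^+ 2 by apply: divr_ge0; [apply: mulr_ge0 => //|exact: sqr_ge0].
have [big|small] := leP 1 (9 * X / (δ * m) ^+ 2).
  move: big B0; set B := 9 * X / _ => big B0. lra.
have D20 : 0 < (δ * m) ^+ 2 by rewrite exprn_gt0.
have hX : 9 * X < (δ * m) ^+ 2 by move: small; rewrite ltr_pdivrMr // mul1r.
have [hL1 hL2] : 3 * (L - a * m) < δ * m /\ - (3 * (L - a * m)) < δ * m.
  apply: (@small_dev (L - a * m) (δ * m) X D0 _ hX); rewrite /X lerDl; exact: sqr_ge0.
have [hE1 hE2] : 3 * (E - b * m) < δ * m /\ - (3 * (E - b * m)) < δ * m.
  apply: (@small_dev (E - b * m) (δ * m) X D0 _ hX); rewrite /X lerDr; exact: sqr_ge0.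
suff : rho x a b <= Gi i l e by lra.
rewrite Gi_eq.
have E0 : 0 <= E by exact: ler0n.
have L0 : 0 <= L by exact: ler0n.
have Ep : 0 < E + 1 by lra.
case: (leqP l i) => li.
- have li' : (l <= i.+1)%N by rewrite (leq_trans li).
  case: (leqP e.+1 (i.+1 - l)) => eil.
    by rewrite divff ?pnatr_eq0.
  rewrite natrB // natS -/I -/L natS -/E.
  have LI : L <= I by rewrite ler_nat.
  have hLE : I + 1 <= L + E.
    have : (i.+1 <= l + e)%N by move: eil li; clear; lia.
    by rewrite -(ler_nat R) natrD natS.
  rewrite /rho; case: ifP => [/eqP b00|/negbT bn0].
    case: (leP a x) => ax /=; last by rewrite divr_ge0 //; lra.
    have amx : a * m <= x * m by rewrite ler_pM2r.
    rewrite b00 mul0r subr0 in hE1 hE2; exfalso; lra.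
  have bp : 0 < b by rewrite lt_def bn0 b0.
  have xab : x - a < b.
    rewrite ltNge; apply/negP => abx.
    have : (a + b) * m <= x * m by rewrite ler_pM2r //; lra.
    lra.
  have G0' : 0 <= (I + 1 - L) / (E + 1) by apply: divr_ge0; lra.
  rewrite ge_max G0' /= ge_min; apply/orP; right.
  have [xa0|xa0] := leP (x - a) 0.
    by apply: (le_trans _ G0'); apply: mulr_le0_ge0 => //; rewrite invr_ge0; lra.
  rewrite ler_pdivrMr // mulrAC ler_pdivlMr //.
  have h1 : (x - a) * (E + 1) <= (x - a) * (b * m + δ * m / 3 + 1).
    rewrite ler_pM2l; lra.
  have h2 : (x - a) * (δ * m / 3 + 1) <= b * (δ * m / 3 + 1).
    rewrite ler_pM2r; lra.
  have h3 : b * ((x + δ) * m + 1 - a * m - δ * m / 3) <= b * (I + 1 - L).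
    rewrite ler_wpM2l //; lra.
  have h4 : 0 <= b * (δ * m / 3) by apply: mulr_ge0 => //; lra.
  lra.
- rewrite (_ : i.+1 - l = 0)%N; last by move: li; clear; lia.
  rewrite minn0 mul0r.
  have hLI : I + 1 <= L by rewrite -natS ler_nat.
  have ax : x < a.
    have : x * m < a * m by lra.
    by rewrite ltr_pM2r.
  rewrite /rho; case: ifP => [_|/negbT bn0].
    by case: (leP a x) => ax' //=; lra.
  have bp : 0 < b by rewrite lt_def bn0 b0.
  rewrite ge_max lexx /= ge_min; apply/orP; right.
  apply: mulr_le0_ge0; [lra|rewrite invr_ge0; lra].
Qed.


End PureD2.
Section PureD3.
Context {R : realType}.

Lemma G_upper (a b x δ : R) (M i l e : nat) :
  0 <= a -> 0 <= b -> a + b <= 1 -> 0 < δ -> 3 <= δ * M%:R ->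
  i%:R <= (x - δ) * M%:R ->
  Gi i l e <=
  rho x a b + 9 * ((l%:R - a * M%:R) ^+ 2 + (e%:R - b * M%:R) ^+ 2) / (δ * M%:R) ^+ 2.
Proof.
move=> a0 b0 ab d0 dM xi.
set m := M%:R in dM xi *; set L := l%:R; set E := e%:R; set I := i%:R in xi *.
have D0 : 0 < δ * m by lra.
have m0 : 0 < m by nra.
set X := (L - a * m) ^+ 2 + (E - b * m) ^+ 2.
have X0 : 0 <= X by apply: addr_ge0; exact: sqr_ge0.
have rho1 := rho_le1 x a b; have rho0 := rho_ge0 x a b.
have G0 := @Gi_ge0 R i l e; have G1 := @Gi_le1 R i l e.
have B0 : 0 <= 9 * X / (δ * m) ^+ 2.
  apply: divr_ge0; [apply: mulr_ge0 => //; lra|exact: sqr_ge0].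
have [big|small] := leP 1 (9 * X / (δ * m) ^+ 2).
  move: big B0; set B := 9 * X / _ => big B0. lra.
have D20 : 0 < (δ * m) ^+ 2 by rewrite exprn_gt0.
have hX : 9 * X < (δ * m) ^+ 2 by move: small; rewrite ltr_pdivrMr // mul1r.
have [hL1 hL2] : 3 * (L - a * m) < δ * m /\ - (3 * (L - a * m)) < δ * m.
  apply: (@small_dev R (L - a * m) (δ * m) X D0 _ hX); rewrite /X lerDl; exact: sqr_ge0.
have [hE1 hE2] : 3 * (E - b * m) < δ * m /\ - (3 * (E - b * m)) < δ * m.
  apply: (@small_dev R (E - b * m) (δ * m) X D0 _ hX); rewrite /X lerDr; exact: sqr_ge0.
suff : Gi i l e <= rho x a b by lra.
have E0 : 0 <= E by exact: ler0n.
have L0 : 0 <= L by exact: ler0n.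
have Ep : 0 < E + 1 by lra.
rewrite Gi_eq.
case: (leqP l i) => li; last first.
  by rewrite (_ : i.+1 - l = 0)%N ?minn0 ?mul0r //; move: li; clear; lia.
have li' : (l <= i.+1)%N by rewrite (leq_trans li).
have LI : L <= I by rewrite ler_nat.
have ax : a < x.
  have : a * m < x * m by lra.
  by rewrite ltr_pM2r.
have Gle : (minn e.+1 (i.+1 - l))%:R / e.+1%:R <= (I + 1 - L) / (E + 1).
  rewrite natS -/E ler_pM2r ?invr_gt0 // -natS -natrB // ler_nat; exact: geq_minr.
rewrite Gi_eq in G1.
rewrite /rho; case: ifP => [_|/negbT bn0].
  by case: (leP a x) => ax' //=; lra.
have bp : 0 < b by rewrite lt_def bn0 b0.
have [xab|xab] := leP b (x - a).
  have h : 1 <= (x - a) / b by rewrite ler_pdivlMr // mul1r.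
  rewrite (_ : Num.min 1 _ = 1); last by apply/min_idPl.
  by rewrite (_ : Num.max 0 1 = 1) //; apply/max_idPr; exact: ler01.
have h01 : 0 <= (x - a) / b <= 1.
  by rewrite divr_ge0 ?ler_pdivrMr //= ?mul1r; lra.
rewrite (_ : Num.min 1 _ = (x - a) / b); last by apply/min_idPr; case/andP: h01.
rewrite (_ : Num.max 0 _ = (x - a) / b); last by apply/max_idPr; case/andP: h01.
apply: (le_trans Gle).
rewrite ler_pdivrMr // mulrAC ler_pdivlMr //.
have h1 : (x - a) * (b * m - δ * m / 3 + 1) <= (x - a) * (E + 1).
  rewrite ler_pM2l; lra.
have h2 : (x - a) * (δ * m / 3) <= b * (δ * m / 3).
  rewrite ler_pM2r; lra.
have h3 : b * (I + 1 - L) <= b * ((x - δ) * m + 1 - a * m + δ * m / 3).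
  rewrite ler_wpM2l //; lra.
have h4 : 0 <= b * (δ * m / 3 - 1) by apply: mulr_ge0 => //; lra.
lra.
Qed.


End PureD3.
Section PureD4.
Context {R : realType}.

Lemma EM_bnd (a b δ : R) M : 0 <= a -> 0 <= b -> a + b <= 1 -> 0 < δ -> 0 < M%:R :> R ->
  forall c : R,
  EM a b M (fun l e => c + (-1) * (9 * ((l%:R - a * M%:R) ^+ 2 + (e%:R - b * M%:R) ^+ 2)
     / (δ * M%:R) ^+ 2)) >= c - 18 / (δ ^+ 2 * M%:R).
Proof.
move=> a0 b0 ab d0 m0 c.
set m := M%:R in m0 *.
have D0 : 0 < (δ * m) ^+ 2 by rewrite exprn_gt0 // mulr_gt0.
rewrite EM_add EM_cst EM_scale.
rewrite (@EM_ext _ a b M _ (fun l e => (9 / (δ * m) ^+ 2) * ((l%:R + (- (a * m))) ^+ 2 + (e%:R + (- (b * m))) ^+ 2))); last first.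
  by move=> l e _; rewrite mulrAC mulrC.
rewrite EM_scale EM_add EM_sqL EM_sqE.
rewrite !subrr expr0n /= !add0r.
suff : 9 / (δ * m) ^+ 2 * (m * a * (1 - a) + m * b * (1 - b)) <= 18 / (δ ^+ 2 * m) by lra.
have -> : 18 / (δ ^+ 2 * m) = 9 / (δ * m) ^+ 2 * (2 * m).
  by field; apply/andP; split; apply: lt0r_neq0 => //; apply: exprn_gt0.
rewrite ler_pM2l ?divr_gt0 //.
have h1 : a * (1 - a) <= 1 by nra.
have h2 : b * (1 - b) <= 1 by nra.
have : m * (a * (1 - a)) <= m * 1 by rewrite ler_pM2l.
have : m * (b * (1 - b)) <= m * 1 by rewrite ler_pM2l.
lra.
Qed.

Lemma EM_lower (a b x δ : R) (M i : nat) :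
  0 <= a -> 0 <= b -> a + b <= 1 -> 0 < δ -> 3 <= δ * M%:R ->
  (x + δ) * M%:R <= i%:R ->
  rho x a b - 18 / (δ ^+ 2 * M%:R) <= EM a b M (Gi i).
Proof.
move=> a0 b0 ab d0 dM xi.
have m0 : 0 < M%:R :> R by nra.
have H := @EM_bnd a b δ M a0 b0 ab d0 m0 (rho x a b).
apply: (le_trans H).
apply: EM_le => // l e _.
rewrite mulN1r; exact: G_lower.
Qed.

Lemma EM_upper (a b x δ : R) (M i : nat) :
  0 <= a -> 0 <= b -> a + b <= 1 -> 0 < δ -> 3 <= δ * M%:R ->
  i%:R <= (x - δ) * M%:R ->
  EM a b M (Gi i) <= rho x a b + 18 / (δ ^+ 2 * M%:R).
Proof.
move=> a0 b0 ab d0 dM xi.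
have m0 : 0 < M%:R :> R by nra.
set B := fun l e : nat => 9 * ((l%:R - a * M%:R) ^+ 2 + (e%:R - b * M%:R) ^+ 2) / (δ * M%:R) ^+ 2.
have H := @EM_bnd a b δ M a0 b0 ab d0 m0 (- rho x a b).
rewrite -/B (@EM_ext _ a b M _ (fun l e => (-1) * (rho x a b + B l e))) in H; last first.
  by move=> l e _; rewrite /B; ring.
rewrite EM_scale in H.
apply: (le_trans (y := EM a b M (fun l e => rho x a b + B l e))); last by lra.
apply: EM_le => // l e _; exact: G_upper.
Qed.


End PureD4.
Section PureF.
Context {R : realType}.

Lemma big_nat (N : nat) (B : R) : exists M : nat, (N <= M)%N /\ B < M%:R.
Proof.
exists (maxn N (Num.truncn B).+1); split; first exact: leq_maxl.
apply: (lt_le_trans (truncnS_gt B)); rewrite ler_nat; exact: leq_maxr.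
Qed.

Lemma final_step (x qv P K : R) (Qf : nat -> nat -> R) :
  0 <= x <= 1 -> 0 <= qv -> qv <= P -> 0 <= K ->
  (forall M, Qf M M = P) ->
  (forall e, 0 < e -> exists N, forall M, (N <= M)%N -> forall i, (i <= M)%N ->
      `|Qf M i - i.+1%:R / M.+1%:R| < e) ->
  (forall δ M i, 0 < δ -> 3 <= δ * M%:R -> (x + δ) * M%:R <= i%:R ->
      qv - K / (δ ^+ 2 * M%:R) * P <= Qf M i) ->
  (forall δ M i, 0 < δ -> 3 <= δ * M%:R -> i%:R <= (x - δ) * M%:R ->
      Qf M i <= qv + K / (δ ^+ 2 * M%:R) * P) ->
  qv = x.
Proof.
move=> /andP[x0 x1] q0 qP K0 QMM Hlim Hlow Hup.
have P0 : 0 <= P by apply: le_trans qP.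
have key : forall η, 0 < η -> exists M : nat, exists N : nat,
    [/\ (N <= M)%N, (forall M', (N <= M')%N -> forall i, (i <= M')%N ->
      `|Qf M' i - i.+1%:R / M'.+1%:R| < η / 4),
     3 <= (η / 4) * M%:R, 2 <= η / 4 * M%:R &
     K / ((η / 4) ^+ 2 * M%:R) * P <= η / 4].
  move=> η η0.
  have [N HN] := Hlim (η / 4) (divr_gt0 η0 (ltr0Sn _ 3)).
  have δ0 : 0 < η / 4 by lra.
  have [M [NM BM]] := big_nat N (12 / η + 8 / η + 4 * K * P / ((η / 4) ^+ 2 * η)).
  have h1 : 0 <= 12 / η by rewrite divr_ge0 //; lra.
  have h2 : 0 <= 8 / η by rewrite divr_ge0 //; lra.
  have h3 : 0 <= 4 * K * P / ((η / 4) ^+ 2 * η).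
    apply: divr_ge0; first by apply: mulr_ge0 => //; apply: mulr_ge0 => //; lra.
    by apply: mulr_ge0; [exact: sqr_ge0|lra].
  have m0 : 0 < M%:R :> R by lra.
  exists M, N; split => //.
  - have : 12 / η < M%:R by lra.
    rewrite ltr_pdivrMr //; lra.
  - have : 8 / η < M%:R by lra.
    rewrite ltr_pdivrMr //; lra.
  - have hd : 0 < (η / 4) ^+ 2 * M%:R by rewrite mulr_gt0 // exprn_gt0.
    rewrite mulrAC ler_pdivrMr //.
    have : 4 * K * P / ((η / 4) ^+ 2 * η) < M%:R by lra.
    rewrite ltr_pdivrMr ?mulr_gt0 ?exprn_gt0 //.
    move=> h; have : K * P < η / 4 * ((η / 4) ^+ 2 * M%:R) by nra.
    lra.
apply/eqP; rewrite eq_le; apply/andP; split.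
- apply/ler_addgt0Pr => η η0.
  have [M [N [NM HN dM hM hK]]] := key η η0.
  have δ0 : 0 < η / 4 by lra.
  have m0 : 0 < M%:R :> R by nra.
  case: (leP (x + 2 * (η / 4)) 1) => xd.
  + set i := (Num.truncn ((x + η / 4) * M%:R)).+1.
    have xm0 : 0 <= (x + η / 4) * M%:R by rewrite mulr_ge0 //; lra.
    have hi1 : (x + η / 4) * M%:R < i%:R by exact: truncnS_gt.
    have hi2 : i%:R <= (x + η / 4) * M%:R + 1.
      by rewrite natS lerD2r truncn_le.
    have iM : (i <= M)%N.
      rewrite -(ler_nat R); apply: (le_trans hi2).
      have : (x + η / 4) * M%:R <= (1 - η / 4) * M%:R by rewrite ler_pM2r //; lra.
      lra.
    have hL := Hlow (η / 4) M i δ0 dM (ltW hi1).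
    have := HN M NM i iM; rewrite ltr_norml => /andP[_ hQ].
    have hfrac : i.+1%:R / M.+1%:R <= x + η / 4 + η / 4.
      rewrite ler_pdivrMr ?ltr0Sn // (natS i) (natS M).
      have hx : 0 <= x + η / 4 by lra.
      have : 0 <= (x + η / 4) * 1 by lra.
      lra.
    move: hL hK hQ hfrac.
    set c := K / _ * P; set fr := i.+1%:R / _ => hL hK hQ hfrac.
    lra.
  + have := HN N (leqnn N) N (leqnn N); rewrite QMM divff ?pnatr_eq0 //.
    rewrite ltr_norml => /andP[_ hQ].
    lra.
- apply/ler_addgt0Pr => η η0.
  have [M [N [NM HN dM hM hK]]] := key η η0.
  have δ0 : 0 < η / 4 by lra.
  have m0 : 0 < M%:R :> R by nra.
  case: (ltP x (η / 4)) => xd; first lra.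
  set i := Num.truncn ((x - η / 4) * M%:R).
  have xm0 : 0 <= (x - η / 4) * M%:R by rewrite mulr_ge0 //; lra.
  have hi1 : i%:R <= (x - η / 4) * M%:R by rewrite truncn_le.
  have hi2 : (x - η / 4) * M%:R < i%:R + 1 by rewrite -natS; exact: truncnS_gt.
  have iM : (i <= M)%N.
    rewrite -(ler_nat R); apply: (le_trans hi1).
    have : (x - η / 4) * M%:R <= 1 * M%:R by rewrite ler_pM2r //; lra.
    lra.
  have hU := Hup (η / 4) M i δ0 dM hi1.
  have := HN M NM i iM; rewrite ltr_norml => /andP[hQ _].
  have hfrac : x - η / 4 - η / 4 <= i.+1%:R / M.+1%:R.
    rewrite ler_pdivlMr ?ltr0Sn // (natS i) (natS M).
    lra.
  move: hU hK hQ hfrac.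
  set c := K / _ * P; set fr := i.+1%:R / _ => hU hK hQ hfrac.
  lra.
Qed.

End PureF.
Section Meas.
Context {R : realType} {d1 : measure_display} {Theta : measurableType d1}.
Variable muT : {measure set Theta -> \bar R}.

Lemma integrable_of_bound (g h : Theta -> R) :
  muT.-integrable setT (EFin \o h) -> measurable_fun setT g ->
  (forall t, `|g t| <= `|h t|) -> muT.-integrable setT (EFin \o g).
Proof.
move=> ih mg gh; apply: le_integrable ih => //.
  exact/measurable_EFinP.
by move=> t _ /=; rewrite lee_fin.
Qed.

Lemma integrable_of_ge0 (g : Theta -> R) :
  measurable_fun setT g -> (forall t, 0 <= g t) ->
  (\int[muT]_t (g t)%:E < +oo)%E -> muT.-integrable setT (EFin \o g).
Proof.
move=> mg g0 fin; apply/integrableP; split; first exact/measurable_EFinP.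
rewrite (eq_integral (fun t => (g t)%:E)) //.
by move=> t _ /=; rewrite ger0_norm.
Qed.

Lemma integrable_scale (g : Theta -> R) (c : R) :
  muT.-integrable setT (EFin \o g) -> muT.-integrable setT (EFin \o (fun t => c * g t)).
Proof.
move=> ig; have := integrableZl measurableT c ig.
by apply: eq_integrable => // t _ /=; rewrite EFinM.
Qed.
Arguments integrable_scale [g].

Lemma integrableD2 (f g : Theta -> R) :
  muT.-integrable setT (EFin \o f) -> muT.-integrable setT (EFin \o g) ->
  muT.-integrable setT (EFin \o (fun t => f t + g t)).
Proof.
move=> i1 i2; have := integrableD measurableT i1 i2.
by apply: eq_integrable => // t _ /=; rewrite EFinD.
Qed.
Arguments integrableD2 [f g].

Lemma integrableB2 (f g : Theta -> R) :
  muT.-integrable setT (EFin \o f) -> muT.-integrable setT (EFin \o g) ->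
  muT.-integrable setT (EFin \o (fun t => f t - g t)).
Proof.
move=> i1 i2; have := integrableD2 i1 (integrable_scale (-1) i2).
by apply: eq_integrable => // t _ /=; rewrite mulN1r.
Qed.
Arguments integrableB2 [f g].

Lemma meas_bool_R (b : Theta -> bool) : measurable_fun setT b ->
  measurable_fun setT (fun t => (b t)%:R : R).
Proof.
move=> mb.
rewrite (_ : (fun t => (b t)%:R) = (fun t => if b t then 1 else 0)); last first.
  by apply/funext => t; case: (b t).
exact: measurable_fun_ifT.
Qed.

Lemma iid_EM (p : Theta -> R) (Lp Ep : Theta -> bool) :
  measurable_fun setT p -> (forall t, 0 <= p t) -> (\int[muT]_t (p t)%:E = 1)%E ->
  measurable_fun setT Lp -> measurable_fun setT Ep -> (forall t, Lp t -> ~~ Ep t) ->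
  forall M G, iid_expect muT p M (fun s => G (count Lp s) (count Ep s)) =
    EM (Rintegral muT setT (fun t => p t * (Lp t)%:R))
       (Rintegral muT setT (fun t => p t * (Ep t)%:R)) M G.
Proof.
move=> mp p0 p1 mL mE LE.
have ip : muT.-integrable setT (EFin \o p).
  by apply: integrable_of_ge0 => //; rewrite p1 ltry.
have iL : muT.-integrable setT (EFin \o (fun t => p t * (Lp t)%:R)).
  apply: integrable_of_bound ip _ _.
    by apply: measurable_funM => //; exact: meas_bool_R.
  move=> t; rewrite normrM ler_piMr //; by case: (Lp t); rewrite ?normr1 ?normr0.
have iE : muT.-integrable setT (EFin \o (fun t => p t * (Ep t)%:R)).
  apply: integrable_of_bound ip _ _.
    by apply: measurable_funM => //; exact: meas_bool_R.
  move=> t; rewrite normrM ler_piMr //; by case: (Ep t); rewrite ?normr1 ?normr0.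
have P1 : Rintegral muT setT p = 1 by rewrite /Rintegral p1.
set a := Rintegral _ _ _; set b := Rintegral _ _ _.
elim=> [|M IH] G //=.
set A := EM a b M (fun l e => G l.+1 e).
set B := EM a b M (fun l e => G l e.+1).
set C := EM a b M G.
transitivity (Rintegral muT setT (fun t => A * (p t * (Lp t)%:R) + B * (p t * (Ep t)%:R)
   + C * (p t - p t * (Lp t)%:R - p t * (Ep t)%:R))).
  apply: eq_Rintegral => t _.
  rewrite (IH (fun l e => G (Lp t + l)%N (Ep t + e)%N)).
  have := LE t; case: (Lp t); case: (Ep t) => //= H0.
  - by have := H0 isT.
  - by rewrite -/A; ring.
  - by rewrite -/B; ring.
  - by rewrite -/C; ring.
have i1 := integrable_scale A iL; have i2 := integrable_scale B iE.
have iR := integrableB2 (integrableB2 ip iL) iE.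
have i3 := integrable_scale C iR.
rewrite RintegralD //; last exact: integrableD2.
rewrite RintegralD // !RintegralZl // !RintegralB // ?integrableB2 // P1 -/a -/b.
ring.
Qed.

Lemma iid_ab (p : Theta -> R) (Lp Ep : Theta -> bool) :
  measurable_fun setT p -> (forall t, 0 <= p t) -> (\int[muT]_t (p t)%:E = 1)%E ->
  measurable_fun setT Lp -> measurable_fun setT Ep -> (forall t, Lp t -> ~~ Ep t) ->
  [/\ 0 <= Rintegral muT setT (fun t => p t * (Lp t)%:R),
      0 <= Rintegral muT setT (fun t => p t * (Ep t)%:R) &
      Rintegral muT setT (fun t => p t * (Lp t)%:R) +
      Rintegral muT setT (fun t => p t * (Ep t)%:R) <= 1].
Proof.
move=> mp p0 p1 mL mE LE.
have ip : muT.-integrable setT (EFin \o p).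
  by apply: integrable_of_ge0 => //; rewrite p1 ltry.
have iL : muT.-integrable setT (EFin \o (fun t => p t * (Lp t)%:R)).
  apply: integrable_of_bound ip _ _.
    by apply: measurable_funM => //; exact: meas_bool_R.
  move=> t; rewrite normrM ler_piMr //; by case: (Lp t); rewrite ?normr1 ?normr0.
have iE : muT.-integrable setT (EFin \o (fun t => p t * (Ep t)%:R)).
  apply: integrable_of_bound ip _ _.
    by apply: measurable_funM => //; exact: meas_bool_R.
  move=> t; rewrite normrM ler_piMr //; by case: (Ep t); rewrite ?normr1 ?normr0.
have P1 : Rintegral muT setT p = 1 by rewrite /Rintegral p1.
split.
- by apply: Rintegral_ge0 => t _; rewrite mulr_ge0.
- by apply: Rintegral_ge0 => t _; rewrite mulr_ge0.
rewrite -RintegralD //; apply: (@le_trans _ _ (Rintegral muT setT p)); last by rewrite P1.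
apply: le_Rintegral => //; first exact: (integrableD2 iL iE).
move=> t _; have := LE t; have := p0 t.
case: (Lp t); case: (Ep t) => /= H0 H1; first by have := H1 isT.
- by rewrite mulr1 mulr0 addr0.
- by rewrite mulr1 mulr0 add0r.
- by rewrite !mulr0 addr0.
Qed.

End Meas.
Section Leb.
Context {R : realType}.

Lemma leb_rho (c b x : R) : 0 <= b ->
  fine ((@lebesgue_measure R) [set u : R | (0 <= u <= 1) /\ c - u * b <= x]) = rho x (c - b) b.
Proof.
move=> b0; rewrite /rho.
have [->|bn0] := eqVneq b 0.
  rewrite subr0.
  have -> : [set u : R | (0 <= u <= 1) /\ c - u * 0 <= x] = [set u | (0 <= u <= 1) /\ c <= x].
    by apply/seteqP; split => u /=; rewrite mulr0 subr0.
  case: (leP c x) => h /=.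
    have -> : [set u : R | (0 <= u <= 1) /\ true] = [set` `[(0:R), 1]%R].
      by apply/seteqP; split => u /=; rewrite in_itv /=; [case|move=> ->].
    by rewrite lebesgue_measure_itv /= lte_fin ltr01 /= subr0.
  have -> : [set u : R | (0 <= u <= 1) /\ false] = set0.
    by apply/seteqP; split => u //= [].
  by rewrite measure0.
have bp : 0 < b by rewrite lt_def bn0 b0.
set t := (c - x) / b.
have -> : [set u : R | (0 <= u <= 1) /\ c - u * b <= x] = [set` `[Num.max 0 t, 1]%R].
  apply/seteqP; split => u /=; rewrite in_itv /= ge_max.
    move=> [/andP[u0 u1] h]; rewrite u0 u1 /= andbT.
    by rewrite /t ler_pdivrMr //; lra.
  move=> /andP[/andP[u0 tu] u1]; rewrite u0 u1; split => //.
  by move: tu; rewrite /t ler_pdivrMr //; lra.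
rewrite lebesgue_measure_itv /= lte_fin.
have -> : (x - (c - b)) / b = 1 - t by rewrite /t; field; rewrite lt0r_neq0.
case: (ltP (Num.max 0 t) 1) => h /=.

  move: h; rewrite gt_max ltr01 /= => t1.
  case: (boolP (t <= 0)) => t0.
    rewrite (_ : Num.max 0 t = 0); last by apply/max_idPl.
    rewrite (_ : Num.min 1 (1 - t) = 1); last by apply/min_idPl; lra.
    by rewrite (_ : Num.max 0 1 = 1) ?subr0 //; apply/max_idPr; exact: ler01.
  rewrite -ltNge in t0.
  rewrite (_ : Num.max 0 t = t); last by apply/max_idPr; lra.
  rewrite (_ : Num.min 1 (1 - t) = 1 - t); last by apply/min_idPr; lra.
  by apply/esym/max_idPr; lra.
move: h; rewrite le_max => /orP[|h]; first by rewrite ler10.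
rewrite (_ : Num.min 1 (1 - t) = 1 - t); last by apply/min_idPr; lra.
by apply/esym/max_idPl; lra.
Qed.

End Leb.
Section Inv.
Context {R : realType}.
Lemma meas_inv : measurable_fun (setT : set R) (@GRing.inv R).
Proof.
have -> : (setT : set R) = [set x | x != 0] `|` [set 0].
  apply/seteqP; split => x //= _.
  by case: (eqVneq x 0) => [->|h]; [right|left].
apply/measurable_funU.
- exact: open_measurable (@open_neq R 0).
- exact: measurable_set1.
split.
  apply: open_continuous_measurable_fun; first exact: open_neq.
  by move=> x /set_mem /= hx; exact: inv_continuous.
exact: measurable_fun_set1.
Qed.
End Inv.
Section EMmeas.
Context {R : realType} {d : measure_display} {X : measurableType d}.
Lemma EM_meas (A B : X -> R) M G : measurable_fun setT A -> measurable_fun setT B ->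
  measurable_fun setT (fun z => EM (A z) (B z) M G).
Proof.
move=> mA mB; elim: M G => [|M IH] G /=; first exact: measurable_cst.
apply: measurable_funD; first apply: measurable_funD.
- exact: measurable_funM.
- exact: measurable_funM.
apply: measurable_funM => //; apply: measurable_funB => //.
exact: measurable_funB.
Qed.

Lemma rho_meas (A B : X -> R) x : measurable_fun setT A -> measurable_fun setT B ->
  measurable_fun setT (fun z => rho x (A z) (B z)).
Proof.
move=> mA mB; rewrite /rho.
apply: measurable_fun_ifT.
- exact: measurable_fun_eqr.
- by apply: meas_bool_R; exact: measurable_fun_ler.
apply: measurable_maxr => //; apply: measurable_minr => //.
apply: measurable_funM; first exact: measurable_funB.
exact: measurableT_comp meas_inv mB.
Qed.
End EMmeas.
Section Model.
Context {R : realType} {d1 d2 : measure_display} {Theta : measurableType d1}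
  {Y : measurableType d2}.
Variables (muT : {measure set Theta -> \bar R}) (prior : Theta -> R)
  (obs phi f : Theta -> Y -> R).
Hypothesis sfT : sigma_finite setT muT.
Hypothesis mprior : measurable_fun setT prior.
Hypothesis prior0 : forall th, 0 <= prior th.
Hypothesis mobs : measurable_fun setT (fun p : Theta * Y => obs p.1 p.2).
Hypothesis obs0 : forall th y, 0 <= obs th y.
Hypothesis mphi : measurable_fun setT (fun p : Theta * Y => phi p.1 p.2).
Hypothesis phi0 : forall th y, 0 <= phi th y.
Hypothesis phi1 : forall y, (\int[muT]_th (phi th y)%:E = 1)%E.
Hypothesis mf : measurable_fun setT (fun p : Theta * Y => f p.1 p.2).

Definition muT' : set Theta -> \bar R := fun A => muT A.
HB.instance Definition _ := isMeasure.Build _ _ _ muT'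
  (measure0 muT) (fun A => measure_ge0 muT A) (@measure_semi_sigma_additive _ _ _ muT).
HB.instance Definition _ := @Measure_isSigmaFinite.Build _ _ _ muT' sfT.

Lemma param_meas d (X : measurableType d) (F : X -> Theta -> R) :
  measurable_fun setT (fun p : X * Theta => F p.1 p.2) ->
  (forall x t, 0 <= F x t) ->
  measurable_fun setT (fun x => Rintegral muT setT (F x)).
Proof.
move=> mF F0.
have := @measurable_fun_fubini_tonelli_F _ _ X Theta R muT' (fun p => (F p.1 p.2)%:E).
rewrite /fubini_F /= => H.
rewrite /Rintegral; apply: measurableT_comp => //; apply: H.
  exact/measurable_EFinP.
by move=> p; rewrite lee_fin.
Qed.

Lemma mphi_y y : measurable_fun setT (phi^~ y).
Proof. exact: (measurable_fun_pair1 y mphi). Qed.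
Lemma mf_y y : measurable_fun setT (f^~ y).
Proof. exact: (measurable_fun_pair1 y mf). Qed.

Definition aZ (z : Theta * Y) :=
  Rintegral muT setT (fun t => phi t z.2 * (f t z.2 < f z.1 z.2)%R%:R).
Definition bZ (z : Theta * Y) :=
  Rintegral muT setT (fun t => phi t z.2 * (f t z.2 == f z.1 z.2)%R%:R).

Lemma ab_z z : [/\ 0 <= aZ z, 0 <= bZ z & aZ z + bZ z <= 1].
Proof.
apply: iid_ab => //.
- exact: mphi_y.
- by apply: measurable_fun_ltr => //; exact: mf_y.
- by apply: measurable_fun_eqr => //; exact: mf_y.
by move=> t /lt_eqF ->.
Qed.

Lemma R_rank_eq M i tht y :
  R_rank muT phi f M i tht y = EM (aZ (tht, y)) (bZ (tht, y)) M (Gi i).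
Proof.
rewrite /R_rank.
apply: (@iid_EM R d1 Theta muT (phi^~ y) (fun t => f t y < f tht y)
   (fun t => f t y == f tht y)) => //.
- exact: mphi_y.
- by apply: measurable_fun_ltr => //; exact: mf_y.
- by apply: measurable_fun_eqr => //; exact: mf_y.
by move=> t /lt_eqF ->.
Qed.


Lemma int_phiL y (P : Theta -> bool) : measurable_fun setT P ->
  muT.-integrable setT (EFin \o (fun t => phi t y * (P t)%:R)).
Proof.
move=> mP.
have ip : muT.-integrable setT (EFin \o phi^~ y).
  by apply: integrable_of_ge0 => //; [exact: mphi_y|rewrite phi1 ltry].
apply: integrable_of_bound ip _ _.
  by apply: measurable_funM; [exact: mphi_y|exact: meas_bool_R].
move=> t; rewrite normrM ler_piMr //; by case: (P t); rewrite ?normr1 ?normr0.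
Qed.

Lemma r_cont_eq x tht y :
  r_cont muT phi f x tht y = rho x (aZ (tht, y)) (bZ (tht, y)).
Proof.
rewrite /r_cont.
have -> : D_atom muT phi f (f tht y) y = bZ (tht, y).
  by rewrite /D_atom /bZ; apply: eq_Rintegral => t _; rewrite mulrC.
have -> : C_cdf muT phi f (f tht y) y = aZ (tht, y) + bZ (tht, y).
  rewrite /C_cdf /aZ /bZ /= -RintegralD //; last first.
  - by apply: int_phiL; apply: measurable_fun_eqr => //; exact: mf_y.
  - by apply: int_phiL; apply: measurable_fun_ltr => //; exact: mf_y.
  apply: eq_Rintegral => t _; rewrite le_eqVlt.
  case: (ltgtP (f t y) (f tht y)) => //= _; rewrite ?mulr0 ?mulr1 ?addr0 ?add0r ?mul1r ?mul0r //.
have [_ b0 _] := ab_z (tht, y).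
by rewrite leb_rho // addrK.
Qed.


Let msnd1 : measurable_fun setT (fun q : (Theta * Y) * Theta => (q.2, q.1.2)).
Proof.
apply: measurable_fun_pair; first exact: measurable_snd.
exact: measurableT_comp measurable_snd measurable_fst.
Qed.

Lemma maZ : measurable_fun setT aZ.
Proof.
apply: (@param_meas _ _ (fun z t => phi t z.2 * (f t z.2 < f z.1 z.2)%R%:R)); last first.
  by move=> z t; rewrite mulr_ge0.
apply: measurable_funM; first exact: (measurableT_comp mphi msnd1).
apply: meas_bool_R; apply: measurable_fun_ltr.
  exact: (measurableT_comp mf msnd1).
exact: (measurableT_comp mf measurable_fst).
Qed.

Lemma mbZ : measurable_fun setT bZ.
Proof.
apply: (@param_meas _ _ (fun z t => phi t z.2 * (f t z.2 == f z.1 z.2)%R%:R)); last first.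
  by move=> z t; rewrite mulr_ge0.
apply: measurable_funM; first exact: (measurableT_comp mphi msnd1).
apply: meas_bool_R; apply: measurable_fun_eqr.
  exact: (measurableT_comp mf msnd1).
exact: (measurableT_comp mf measurable_fst).
Qed.

Lemma mpm : measurable_fun setT (pi_marg muT prior obs).
Proof.
apply: (@param_meas _ _ (fun y t => obs t y * prior t)); last first.
  by move=> y t; rewrite mulr_ge0.
apply: measurable_funM.
  have msw : measurable_fun setT (fun q : Y * Theta => (q.2, q.1)).
    by apply: measurable_fun_pair; [exact: measurable_snd|exact: measurable_fst].
  exact: (measurableT_comp mobs msw).
exact: (measurableT_comp mprior measurable_snd).
Qed.

Lemma pm0 y : 0 <= pi_marg muT prior obs y.
Proof. by apply: Rintegral_ge0 => t _; rewrite mulr_ge0. Qed.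

Lemma post0 tht y : 0 <= pi_post muT prior obs tht y.
Proof. by rewrite /pi_post divr_ge0 ?mulr_ge0 ?pm0. Qed.

Lemma mpost : measurable_fun setT (fun z : Theta * Y => pi_post muT prior obs z.1 z.2).
Proof.
rewrite /pi_post; apply: measurable_funM.
  apply: measurable_funM => //.
  exact: (measurableT_comp mprior measurable_fst).
apply: (measurableT_comp meas_inv).
exact: (measurableT_comp mpm measurable_snd).
Qed.

Lemma mpost_y y : measurable_fun setT (fun tht => pi_post muT prior obs tht y).
Proof. exact: (measurable_fun_pair1 y mpost). Qed.

Lemma post_int y : muT.-integrable setT (EFin \o (fun tht => pi_post muT prior obs tht y)).
Proof.
have mh : measurable_fun setT (fun t => obs t y * prior t).
  apply: measurable_funM => //; exact: (measurable_fun_pair1 y mobs).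
have h0 : forall t, 0 <= obs t y * prior t by move=> t; rewrite mulr_ge0.
have := leey (\int[muT]_t (obs t y * prior t)%:E)%E.
rewrite le_eqVlt => /orP[/eqP hoo|hfin].
  have -> : (fun tht => pi_post muT prior obs tht y) = (fun _ => 0).
    by apply/funext => t; rewrite /pi_post /pi_marg /Rintegral hoo /= invr0 mulr0.
  exact: integrable0.
have ih := integrable_of_ge0 muT _ mh h0 hfin.
have := integrable_scale muT _ ((pi_marg muT prior obs y)^-1) ih.
by apply: eq_integrable => // t _ /=; rewrite /pi_post mulrC.
Qed.


Definition Pv (y : Y) := Rintegral muT setT (fun tht => pi_post muT prior obs tht y).

Lemma EMGi_01 z M i : 0 <= EM (aZ z) (bZ z) M (Gi i) <= 1.
Proof.
have [a0 b0 ab] := ab_z z.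
apply/andP; split.
  rewrite -[X in X <= _](EM_cst (aZ z) (bZ z) M 0).
  by apply: EM_le => // l e _; exact: Gi_ge0.
rewrite -[X in _ <= X](EM_cst (aZ z) (bZ z) M 1).
by apply: EM_le => // l e _; exact: Gi_le1.
Qed.

Lemma int_post_mul y (g : Theta -> R) : measurable_fun setT g -> (forall t, 0 <= g t <= 1) ->
  muT.-integrable setT (EFin \o (fun t => pi_post muT prior obs t y * g t)).
Proof.
move=> mg g01; apply: (integrable_of_bound muT _ _ (post_int y)).
  by apply: measurable_funM => //; exact: mpost_y.
move=> t; have /andP[g0 g1] := g01 t; have p0 := post0 t y.
rewrite (ger0_norm p0) ger0_norm; [exact: (ler_piMr p0 g1)|exact: mulr_ge0].
Qed.

Lemma maZ_y y : measurable_fun setT (fun tht => aZ (tht, y)).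
Proof. exact: (measurable_fun_pair1 y maZ). Qed.
Lemma mbZ_y y : measurable_fun setT (fun tht => bZ (tht, y)).
Proof. exact: (measurable_fun_pair1 y mbZ). Qed.

Lemma Q_eq M i y : Q_rank muT phi f prior obs M i y =
  Rintegral muT setT (fun tht => pi_post muT prior obs tht y *
    EM (aZ (tht, y)) (bZ (tht, y)) M (Gi i)).
Proof. by apply: eq_Rintegral => t _; rewrite R_rank_eq. Qed.

Lemma q_eq x y : q_cont muT phi f prior obs x y =
  Rintegral muT setT (fun tht => pi_post muT prior obs tht y *
    rho x (aZ (tht, y)) (bZ (tht, y))).
Proof. by apply: eq_Rintegral => t _; rewrite r_cont_eq. Qed.

Lemma int_EM y M i : muT.-integrable setT (EFin \o (fun t => pi_post muT prior obs t y *
    EM (aZ (t, y)) (bZ (t, y)) M (Gi i))).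
Proof.
apply: int_post_mul; first by apply: EM_meas; [exact: maZ_y|exact: mbZ_y].
by move=> t; exact: EMGi_01.
Qed.

Lemma int_rho y x : muT.-integrable setT (EFin \o (fun t => pi_post muT prior obs t y *
    rho x (aZ (t, y)) (bZ (t, y)))).
Proof.
apply: int_post_mul; first by apply: rho_meas; [exact: maZ_y|exact: mbZ_y].
by move=> t; rewrite rho_ge0 rho_le1.
Qed.

Lemma Q_lower y x δ M i : 0 < δ -> 3 <= δ * M%:R -> (x + δ) * M%:R <= i%:R ->
  q_cont muT phi f prior obs x y - 18 / (δ ^+ 2 * M%:R) * Pv y <=
  Q_rank muT phi f prior obs M i y.
Proof.
move=> d0 dM xi.
rewrite Q_eq q_eq /Pv -RintegralZl //; last exact: post_int.
rewrite -RintegralB //; last first.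
- exact: integrable_scale muT _ _ (post_int y).
- exact: int_rho.
apply: le_Rintegral => //; last first.
  move=> t _; have [a0 b0 ab] := ab_z (t, y).
  rewrite [_ * pi_post _ _ _ _ _]mulrC -mulrBr; apply: ler_wpM2l; first exact: post0.
  exact: EM_lower.
- exact: int_EM.
apply: (integrableB2 muT); first exact: int_rho.
exact: integrable_scale muT _ _ (post_int y).
Qed.

Lemma Q_upper y x δ M i : 0 < δ -> 3 <= δ * M%:R -> i%:R <= (x - δ) * M%:R ->
  Q_rank muT phi f prior obs M i y <=
  q_cont muT phi f prior obs x y + 18 / (δ ^+ 2 * M%:R) * Pv y.
Proof.
move=> d0 dM xi.
rewrite Q_eq q_eq /Pv -RintegralZl //; last exact: post_int.
rewrite -RintegralD //; last first.
- exact: integrable_scale muT _ _ (post_int y).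
- exact: int_rho.
apply: le_Rintegral => //; last first.
  move=> t _; have [a0 b0 ab] := ab_z (t, y).
  rewrite [_ * pi_post _ _ _ _ _]mulrC -mulrDr; apply: ler_wpM2l; first exact: post0.
  exact: EM_upper.
- apply: (integrableD2 muT); first exact: int_rho.
  exact: integrable_scale muT _ _ (post_int y).
exact: int_EM.
Qed.

Lemma Q_MM y M : Q_rank muT phi f prior obs M M y = Pv y.
Proof.
rewrite Q_eq /Pv; apply: eq_Rintegral => t _.
rewrite (@EM_ext _ _ _ M _ (fun _ _ => 1)) ?EM_cst ?mulr1 // => l e le.
rewrite Gi_eq (minn_idPl _) ?divff ?pnatr_eq0 //.
by move: le; clear; lia.
Qed.

Lemma q_bounds x y : 0 <= q_cont muT phi f prior obs x y <= Pv y.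
Proof.
rewrite q_eq; apply/andP; split.
  by apply: Rintegral_ge0 => t _; rewrite mulr_ge0 ?rho_ge0 ?post0.
apply: le_Rintegral => //; [exact: int_rho|exact: post_int|].
move=> t _; apply: ler_piMr; [exact: post0|exact: rho_le1].
Qed.

Lemma part1 y :
  (forall e : R, 0 < e -> exists N : nat, forall M : nat, (N <= M)%N ->
     forall i : nat, (i <= M)%N ->
       `| Q_rank muT phi f prior obs M i y - i.+1%:R / M.+1%:R | < e) ->
  forall x : R, 0 <= x <= 1 -> q_cont muT phi f prior obs x y = x.
Proof.
move=> H x x01; have /andP[q0 qP] := q_bounds x y.
apply: (@final_step R x _ (Pv y) 18 (fun M i => Q_rank muT phi f prior obs M i y)) => //.
- exact: Q_MM.
- by move=> δ M i; exact: Q_lower.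
- by move=> δ M i; exact: Q_upper.
Qed.


Variable muY : {measure set Y -> \bar R}.

Let msw : measurable_fun setT (fun q : Y * Theta => (q.2, q.1)).
Proof. by apply: measurable_fun_pair; [exact: measurable_snd|exact: measurable_fst]. Qed.

Lemma mQ M i : measurable_fun setT (fun y => Q_rank muT phi f prior obs M i y).
Proof.
rewrite (_ : (fun y => _) = (fun y => Rintegral muT setT (fun tht =>
   pi_post muT prior obs tht y * EM (aZ (tht, y)) (bZ (tht, y)) M (Gi i)))); last first.
  by apply/funext => y; exact: Q_eq.
apply: (@param_meas _ _ (fun y tht => pi_post muT prior obs tht y *
   EM (aZ (tht, y)) (bZ (tht, y)) M (Gi i))); last first.
  by move=> y t; rewrite mulr_ge0 ?post0 //; case/andP: (EMGi_01 (t, y) M i).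
have mG : measurable_fun setT (fun z : Theta * Y =>
    pi_post muT prior obs z.1 z.2 * EM (aZ z) (bZ z) M (Gi i)).
  apply: measurable_funM; first exact: mpost.
  by apply: EM_meas; [exact: maZ|exact: mbZ].
exact: (measurableT_comp mG msw).
Qed.

Lemma mq x : measurable_fun setT (fun y => q_cont muT phi f prior obs x y).
Proof.
rewrite (_ : (fun y => _) = (fun y => Rintegral muT setT (fun tht =>
   pi_post muT prior obs tht y * rho x (aZ (tht, y)) (bZ (tht, y))))); last first.
  by apply/funext => y; exact: q_eq.
apply: (@param_meas _ _ (fun y tht => pi_post muT prior obs tht y *
   rho x (aZ (tht, y)) (bZ (tht, y)))); last first.
  by move=> y t; rewrite mulr_ge0 ?post0 ?rho_ge0.
have mG : measurable_fun setT (fun z : Theta * Y =>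
    pi_post muT prior obs z.1 z.2 * rho x (aZ z) (bZ z)).
  apply: measurable_funM; first exact: mpost.
  by apply: rho_meas; [exact: maZ|exact: mbZ].
exact: (measurableT_comp mG msw).
Qed.

Lemma mPv : measurable_fun setT Pv.
Proof.
apply: (@param_meas _ _ (fun y tht => pi_post muT prior obs tht y)); last first.
  by move=> y t; rewrite post0.
exact: (measurableT_comp mpost msw).
Qed.

Lemma Q_bounds M i y : 0 <= Q_rank muT phi f prior obs M i y <= Pv y.
Proof.
rewrite Q_eq; apply/andP; split.
  by apply: Rintegral_ge0 => t _; rewrite mulr_ge0 ?post0 //; case/andP: (EMGi_01 (t, y) M i).
apply: le_Rintegral => //; [exact: int_EM|exact: post_int|].
move=> t _; apply: ler_piMr; first exact: post0.
by case/andP: (EMGi_01 (t, y) M i).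
Qed.

Lemma part2 :
  (forall e : R, 0 < e -> exists N : nat, forall M : nat, (N <= M)%N ->
     forall i : nat, (i <= M)%N ->
       `| Rintegral muY setT
            (fun y => Q_rank muT phi f prior obs M i y * pi_marg muT prior obs y)
          - i.+1%:R / M.+1%:R | < e) ->
  passes_continuous_SBC muT muY prior obs phi f.
Proof.
move=> H x x01.
set pm := pi_marg muT prior obs.
set P2 := Rintegral muY setT (fun y => Pv y * pm y).
have QMM : forall M, Rintegral muY setT (fun y => Q_rank muT phi f prior obs M M y * pm y) = P2.
  by move=> M; apply: eq_Rintegral => y _; rewrite Q_MM.
have P21 : P2 = 1.
  apply/eqP; rewrite -subr_eq0 -normr_le0; apply/ler_addgt0Pr => e e0.
  have [N HN] := H e e0; have := HN N (leqnn N) N (leqnn N).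
  rewrite QMM divff ?pnatr_eq0 // add0r => /ltW.
  done.
have mPpm : measurable_fun setT (fun y => Pv y * pm y).
  by apply: measurable_funM; [exact: mPv|exact: mpm].
have iP : muY.-integrable setT (EFin \o (fun y => Pv y * pm y)).
  apply: integrable_of_ge0 => //.
    by move=> y; rewrite mulr_ge0 ?pm0 //; case/andP: (q_bounds 0 y) => ? /(le_trans _); apply.
  rewrite ltey; apply/negP => /eqP hoo.
  by move: P21; rewrite /P2 /Rintegral hoo /= => /eqP; rewrite eq_sym oner_eq0.
have pmq : forall y, 0 <= q_cont muT phi f prior obs x y * pm y <= Pv y * pm y.
  move=> y; have /andP[q0 qP] := q_bounds x y; have p0 := pm0 y.
  by rewrite mulr_ge0 // ler_wpM2r.
have pmQ : forall M i y, 0 <= Q_rank muT phi f prior obs M i y * pm y <= Pv y * pm y.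
  move=> M i y; have /andP[q0 qP] := Q_bounds M i y; have p0 := pm0 y.
  by rewrite mulr_ge0 // ler_wpM2r.
have iq : muY.-integrable setT (EFin \o (fun y => q_cont muT phi f prior obs x y * pm y)).
  apply: (integrable_of_bound muY _ _ iP).
    by apply: measurable_funM; [exact: mq|exact: mpm].
  move=> y; have /andP[h0 h1] := pmq y.
  by rewrite !ger0_norm // (le_trans h0 h1).
have iQ : forall M i, muY.-integrable setT
    (EFin \o (fun y => Q_rank muT phi f prior obs M i y * pm y)).
  move=> M i; apply: (integrable_of_bound muY _ _ iP).
    by apply: measurable_funM; [exact: mQ|exact: mpm].
  move=> y; have /andP[h0 h1] := pmQ M i y.
  by rewrite !ger0_norm // (le_trans h0 h1).
apply: (@final_step R x _ P2 18
  (fun M i => Rintegral muY setT (fun y => Q_rank muT phi f prior obs M i y * pm y))) => //.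
- by apply: Rintegral_ge0 => y _; case/andP: (pmq y).
- by apply: le_Rintegral => // y _; case/andP: (pmq y).
- move=> δ M i d0 dM xi.
  rewrite /P2 -RintegralZl // -RintegralB //; last exact: (integrable_scale muY _ _ iP).
  apply: le_Rintegral => //.
    apply: (integrableB2 muY) => //; exact: (integrable_scale muY _ _ iP).
  move=> y _; rewrite mulrA -mulrBl; apply: ler_wpM2r; first exact: pm0.
  exact: Q_lower.
- move=> δ M i d0 dM xi.
  rewrite /P2 -RintegralZl // -RintegralD //; last exact: (integrable_scale muY _ _ iP).
  apply: le_Rintegral => //.
    apply: (integrableD2 muY) => //; exact: (integrable_scale muY _ _ iP).
  move=> y _; rewrite mulrA -mulrDl; apply: ler_wpM2r; first exact: pm0.
  exact: Q_upper.
Qed.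

End Model.

Theorem theorem2 (R : realType) (d1 d2 : measure_display)
  (Theta : measurableType d1) (Y : measurableType d2)
  (muT : {measure set Theta -> \bar R}) (muY : {measure set Y -> \bar R})
  (prior : Theta -> R) (obs : Theta -> Y -> R)
  (phi : Theta -> Y -> R) (f : Theta -> Y -> R) :
  (* reference measures *)
  sigma_finite setT muT -> sigma_finite setT muY ->
  (* model pi: prior density and observation density *)
  measurable_fun setT prior -> (forall th, 0 <= prior th) ->
  (\int[muT]_th (prior th)%:E = 1)%E ->
  measurable_fun setT (fun p : Theta * Y => obs p.1 p.2) ->
  (forall th y, 0 <= obs th y) ->
  (forall th, (\int[muY]_y (obs th y)%:E = 1)%E) ->
  (* posterior family phi *)
  measurable_fun setT (fun p : Theta * Y => phi p.1 p.2) ->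
  (forall th y, 0 <= phi th y) ->
  (forall y, (\int[muT]_th (phi th y)%:E = 1)%E) ->
  (* test quantity f *)
  measurable_fun setT (fun p : Theta * Y => f p.1 p.2) ->
  (* (1) *)
  (forall y : Y,
     (forall e : R, 0 < e -> exists N : nat, forall M : nat, (N <= M)%N ->
        forall i : nat, (i <= M)%N ->
          `| Q_rank muT phi f prior obs M i y - i.+1%:R / M.+1%:R | < e) ->
     forall x : R, 0 <= x <= 1 -> q_cont muT phi f prior obs x y = x)
  /\
  (* (2) *)
  ((forall e : R, 0 < e -> exists N : nat, forall M : nat, (N <= M)%N ->
        forall i : nat, (i <= M)%N ->
          `| Rintegral muY setT
               (fun y => Q_rank muT phi f prior obs M i y * pi_marg muT prior obs y)
             - i.+1%:R / M.+1%:R | < e) ->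
   passes_continuous_SBC muT muY prior obs phi f).
Proof.
move=> sfT _ mprior prior0 _ mobs obs0 _ mphi phi0 phi1 mf; split.
- by move=> y H; apply: part1.
- by move=> H; apply: part2.
Qed.
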